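(* Let $\Gamma$ be a finite undirected graph in which any two adjacent vertices have exactly one common neighbor. Then $G_{aut}^+(\Gamma)=G_{aut}^*(\Gamma)$. In particular, $G_{aut}^+(\Gamma)=G_{aut}^*(\Gamma)$ for every distance-regular graph $\Gamma$ whose intersection array satisfies $b_0=b_1+2$.
   Context: $\Gamma=(V,E)$ is a finite simple undirected graph, $V=\{1,\dots,n\}$. $C(G_{aut}^+(\Gamma))$ is the universal unital $C^*$-algebra generated by $u_{ij}$, $1\le i,j\le n$, with relations: (R1) $u_{ij}=u_{ij}^*=u_{ij}^2$; (R2) $\sum_{l} u_{il}=1=\sum_{l} u_{li}$ for all $i$; (R3) $u_{ij}u_{kl}=u_{kl}u_{ij}=0$ whenever exactly one of $(i,k)\in E$, $(j,l)\in E$ holds. ''$G_{aut}^+(\Gamma)=G_{aut}^*(\Gamma)$'' means that $u_{ij}u_{kl}=u_{kl}u_{ij}$ holds in $C(G_{aut}^+(\Gamma))$ for all $(i,k)\in E$, $(j,l)\in E$. A connected regular graph is distance-regular with diameter $D$ and intersection array $\{b_0,\dots,b_{D-1};c_1,\dots,c_D\}$ if for any vertices $v,w$ with $d(v,w)=i$, exactly $b_i$ neighbors of $w$ are at distance $i+1$ from $v$ and exactly $c_i$ neighbors of $w$ are at distance $i-1$ from $v$ (these numbers depending only on $i$). *)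

(* Defs.v *)
From Stdlib Require Import Reals List.
Set Implicit Arguments.

Definition Cx : Type := (R * R)%type.
Definition Cx1 : Cx := (1%R, 0%R).
Definition Cxadd (a b : Cx) : Cx := (fst a + fst b, snd a + snd b)%R.
Definition Cxmul (a b : Cx) : Cx :=
  (fst a * fst b - snd a * snd b, fst a * snd b + snd a * fst b)%R.
Definition Cxconj (a : Cx) : Cx := (fst a, - snd a)%R.
Definition Cxmod (a : Cx) : R := sqrt (fst a * fst a + snd a * snd a)%R.

(** * Unital C*-algebras (the zero algebra is allowed) *)
Record CStarAlgebra := {
  car :> Type;
  czero : car;
  cone : car;
  cadd : car -> car -> car;
  copp : car -> car;
  cmul : car -> car -> car;
  cscal : Cx -> car -> car;
  cstar : car -> car;
  cnorm : car -> R;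
  cadd_assoc : forall x y z, cadd x (cadd y z) = cadd (cadd x y) z;
  cadd_comm : forall x y, cadd x y = cadd y x;
  cadd_0l : forall x, cadd czero x = x;
  cadd_oppl : forall x, cadd (copp x) x = czero;
  cscal_1 : forall x, cscal Cx1 x = x;
  cscal_assoc : forall a b x, cscal a (cscal b x) = cscal (Cxmul a b) x;
  cscal_addl : forall a b x, cscal (Cxadd a b) x = cadd (cscal a x) (cscal b x);
  cscal_addr : forall a x y, cscal a (cadd x y) = cadd (cscal a x) (cscal a y);
  cmul_assoc : forall x y z, cmul x (cmul y z) = cmul (cmul x y) z;
  cmul_1l : forall x, cmul cone x = x;
  cmul_1r : forall x, cmul x cone = x;
  cmul_addl : forall x y z, cmul (cadd x y) z = cadd (cmul x z) (cmul y z);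
  cmul_addr : forall x y z, cmul x (cadd y z) = cadd (cmul x y) (cmul x z);
  cscal_mull : forall a x y, cmul (cscal a x) y = cscal a (cmul x y);
  cscal_mulr : forall a x y, cmul x (cscal a y) = cscal a (cmul x y);
  cstar_invol : forall x, cstar (cstar x) = x;
  cstar_add : forall x y, cstar (cadd x y) = cadd (cstar x) (cstar y);
  cstar_mul : forall x y, cstar (cmul x y) = cmul (cstar y) (cstar x);
  cstar_scal : forall a x, cstar (cscal a x) = cscal (Cxconj a) (cstar x);
  cnorm_def : forall x, cnorm x = 0%R -> x = czero;
  cnorm_tri : forall x y, (cnorm (cadd x y) <= cnorm x + cnorm y)%R;
  cnorm_scal : forall a x, cnorm (cscal a x) = (Cxmod a * cnorm x)%R;
  cnorm_submul : forall x y, (cnorm (cmul x y) <= cnorm x * cnorm y)%R;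
  ccomplete : forall s : nat -> car,
    (forall eps, (0 < eps)%R -> exists N, forall p q, (N <= p)%nat -> (N <= q)%nat ->
        (cnorm (cadd (s p) (copp (s q))) < eps)%R) ->
    exists l, forall eps, (0 < eps)%R -> exists N, forall p, (N <= p)%nat ->
        (cnorm (cadd (s p) (copp l)) < eps)%R;
  cstar_id : forall x, cnorm (cmul (cstar x) x) = (cnorm x * cnorm x)%R
}.

Fixpoint csum (A : CStarAlgebra) (f : nat -> A) (m : nat) : A :=
  match m with
  | O => czero A
  | S m' => cadd A (csum A f m') (f m')
  end.

(** * Graphs.  Vertex set {0,...,n-1} (the paper's {1,...,n} shifted by one);
    E is the adjacency relation. *)
Definition simple_graph (n : nat) (E : nat -> nat -> Prop) : Prop :=
  (forall i k, E i k -> (i < n)%nat /\ (k < n)%nat) /\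
  (forall i k, E i k -> E k i) /\
  (forall i, ~ E i i).

(** The relations (R1)-(R3) of C(G_aut^+(Gamma)) for a family u in A. *)
Definition qaut_relations (n : nat) (E : nat -> nat -> Prop)
  (A : CStarAlgebra) (u : nat -> nat -> A) : Prop :=
  (forall i j, (i < n)%nat -> (j < n)%nat ->
      cstar A (u i j) = u i j /\ cmul A (u i j) (u i j) = u i j) /\
  (forall i, (i < n)%nat ->
      csum A (fun l => u i l) n = cone A /\ csum A (fun l => u l i) n = cone A) /\
  (forall i j k l, (i < n)%nat -> (j < n)%nat -> (k < n)%nat -> (l < n)%nat ->
      ~ (E i k <-> E j l) ->
      cmul A (u i j) (u k l) = czero A /\ cmul A (u k l) (u i j) = czero A).

(** G_aut^+(Gamma) = G_aut^*(Gamma): in the universal C*-algebra the generators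
    u_ij, u_kl commute for (i,k), (j,l) edges.  Equivalently (universal property),
    this holds for every family satisfying (R1)-(R3) in every unital C*-algebra. *)
Definition Gaut_plus_eq_star (n : nat) (E : nat -> nat -> Prop) : Prop :=
  forall (A : CStarAlgebra) (u : nat -> nat -> A),
    qaut_relations n E A u ->
    forall i j k l, E i k -> E j l ->
      cmul A (u i j) (u k l) = cmul A (u k l) (u i j).

Inductive walk (E : nat -> nat -> Prop) : nat -> nat -> nat -> Prop :=
  | walk0 : forall v, walk E v v 0
  | walkS : forall v x w m, E v x -> walk E x w m -> walk E v w (S m).

Definition dist (E : nat -> nat -> Prop) (v w d : nat) : Prop :=
  walk E v w d /\ forall m, walk E v w m -> (d <= m)%nat.

Definition card_eq (P : nat -> Prop) (k : nat) : Prop :=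
  exists l : list nat, NoDup l /\ length l = k /\ forall x, In x l <-> P x.

(** Gamma is distance-regular with diameter D and intersection numbers
    b_i (0 <= i <= D, so b_D = 0) and c_i (1 <= i <= D). *)
Definition distance_regular (n : nat) (E : nat -> nat -> Prop)
  (D : nat) (b c : nat -> nat) : Prop :=
  (forall v w, (v < n)%nat -> (w < n)%nat -> exists d, dist E v w d) /\
  (exists k, forall v, (v < n)%nat -> card_eq (fun w => E v w) k) /\
  (exists v w, (v < n)%nat /\ (w < n)%nat /\ dist E v w D) /\
  (forall v w d, (v < n)%nat -> (w < n)%nat -> dist E v w d -> (d <= D)%nat) /\
  (forall i v w, (i <= D)%nat -> (v < n)%nat -> (w < n)%nat -> dist E v w i ->
     card_eq (fun x => E w x /\ dist E v x (S i)) (b i)) /\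
  (forall i v w, (1 <= i)%nat -> (i <= D)%nat -> (v < n)%nat -> (w < n)%nat ->
     dist E v w i ->
     card_eq (fun x => E w x /\ dist E v x (i - 1)) (c i)).

(* Main.v *)
Require Import Defs.
From Stdlib Require Import Reals List Classical Lia.

Lemma add_0r (A : CStarAlgebra) (x : A) : cadd A x (czero A) = x.
Proof. rewrite cadd_comm, cadd_0l; reflexivity. Qed.

Lemma add_cancel (A : CStarAlgebra) (x y z : A) : cadd A x y = cadd A x z -> y = z.
Proof.
  intro H.
  assert (H0 : cadd A (copp A x) (cadd A x y) = cadd A (copp A x) (cadd A x z)) by now rewrite H.
  rewrite !cadd_assoc, cadd_oppl, !cadd_0l in H0. exact H0.
Qed.

Lemma idem0 (A : CStarAlgebra) (x : A) : cadd A x x = x -> x = czero A.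
Proof. intro H. apply (add_cancel _ x). rewrite add_0r. exact H. Qed.

Lemma mul_0r (A : CStarAlgebra) (x : A) : cmul A x (czero A) = czero A.
Proof. apply idem0. rewrite <- cmul_addr, cadd_0l. reflexivity. Qed.

Lemma mul_0l (A : CStarAlgebra) (x : A) : cmul A (czero A) x = czero A.
Proof. apply idem0. rewrite <- cmul_addl, cadd_0l. reflexivity. Qed.

Lemma opp_unique (A : CStarAlgebra) (a b c : A) :
  cadd A a c = czero A -> cadd A b c = czero A -> a = b.
Proof.
  intros H1 H2. apply (add_cancel _ c). rewrite (cadd_comm A c a), (cadd_comm A c b), H1, H2.
  reflexivity.
Qed.

Lemma mul_oppr (A : CStarAlgebra) (x y : A) : cmul A x (copp A y) = copp A (cmul A x y).
Proof.
  apply opp_unique with (cmul A x y).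
  - rewrite <- cmul_addr, cadd_oppl, mul_0r. reflexivity.
  - apply cadd_oppl.
Qed.

Lemma mul_oppl (A : CStarAlgebra) (x y : A) : cmul A (copp A x) y = copp A (cmul A x y).
Proof.
  apply opp_unique with (cmul A x y).
  - rewrite <- cmul_addl, cadd_oppl, mul_0l. reflexivity.
  - apply cadd_oppl.
Qed.

Lemma opp_opp (A : CStarAlgebra) (x : A) : copp A (copp A x) = x.
Proof.
  apply opp_unique with (copp A x).
  - apply cadd_oppl.
  - rewrite cadd_comm. apply cadd_oppl.
Qed.

Lemma star0 (A : CStarAlgebra) : cstar A (czero A) = czero A.
Proof. apply idem0. rewrite <- cstar_add, cadd_0l. reflexivity. Qed.

Lemma star_opp (A : CStarAlgebra) (x : A) : cstar A (copp A x) = copp A (cstar A x).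
Proof.
  apply opp_unique with (cstar A x).
  - rewrite <- cstar_add, cadd_oppl, star0. reflexivity.
  - apply cadd_oppl.
Qed.

Lemma norm0 (A : CStarAlgebra) : cnorm A (czero A) = 0%R.
Proof.
  assert (H : cscal A (0%R, 0%R) (czero A) = czero A).
  { apply idem0. rewrite <- cscal_addl. unfold Cxadd. simpl. rewrite Rplus_0_l. reflexivity. }
  rewrite <- H, cnorm_scal. unfold Cxmod. simpl.
  rewrite Rmult_0_l, Rplus_0_l, sqrt_0, Rmult_0_l. reflexivity.
Qed.

Lemma comm_of (A : CStarAlgebra) (a b : A) :
  cstar A a = a -> cmul A a a = a -> cstar A b = b -> cmul A b b = b ->
  cmul A (cmul A (cmul A (cmul A a b) a) b) a = cmul A (cmul A a b) a ->
  cmul A a b = cmul A b a.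
Proof.
  intros Sa Ia Sb Ib H.
  set (P := cmul A (cmul A a b) a).
  set (X := cmul A a b).
  assert (SX : cstar A X = cmul A b a) by (unfold X; rewrite cstar_mul, Sa, Sb; reflexivity).
  assert (SP : cstar A P = P) by
    (unfold P; rewrite !cstar_mul, Sa, Sb, cmul_assoc; reflexivity).
  assert (XX : cmul A X (cmul A b a) = P).
  { unfold X, P. rewrite !cmul_assoc. rewrite <- (cmul_assoc A a b b), Ib. reflexivity. }
  assert (XP : cmul A X P = P).
  { unfold X, P. rewrite !cmul_assoc. exact H. }
  assert (PX : cmul A P (cmul A b a) = P).
  { unfold P. rewrite !cmul_assoc. exact H. }
  assert (PP : cmul A P P = P).
  { unfold P. rewrite !cmul_assoc. rewrite <- (cmul_assoc A _ a a), Ia. exact H. }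
  set (T := cadd A X (copp A P)).
  assert (ST : cstar A T = cadd A (cmul A b a) (copp A P)).
  { unfold T. rewrite cstar_add, star_opp, SX, SP. reflexivity. }
  assert (TT : cmul A T (cstar A T) = czero A).
  { rewrite ST. unfold T. rewrite cmul_addl, !cmul_addr, !mul_oppl, !mul_oppr, opp_opp.
    rewrite XX, XP, PX, PP. rewrite (cadd_comm A P (copp A P)). rewrite cadd_oppl, cadd_0l. reflexivity. }
  assert (N := cstar_id A (cstar A T)).
  rewrite cstar_invol, TT, norm0 in N.
  assert (N0 : cnorm A (cstar A T) = 0%R).
  { symmetry in N. destruct (Rmult_integral _ _ N); assumption. }
  apply cnorm_def in N0.
  assert (T0 : T = czero A) by (rewrite <- (cstar_invol A T), N0; apply star0).
  assert (XP' : X = P).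
  { apply opp_unique with (copp A P). exact T0. rewrite cadd_comm. apply cadd_oppl. }
  rewrite <- SX, XP'. symmetry. exact SP.
Qed.

Lemma csum_mul_l (A : CStarAlgebra) (x : A) f m :
  cmul A x (csum A f m) = csum A (fun a => cmul A x (f a)) m.
Proof. induction m; simpl. apply mul_0r. rewrite cmul_addr, IHm. reflexivity. Qed.

Lemma csum_mul_r (A : CStarAlgebra) (y : A) f m :
  cmul A (csum A f m) y = csum A (fun a => cmul A (f a) y) m.
Proof. induction m; simpl. apply mul_0l. rewrite cmul_addl, IHm. reflexivity. Qed.

Lemma csum_zero (A : CStarAlgebra) f m :
  (forall a, (a < m)%nat -> f a = czero A) -> csum A f m = czero A.
Proof.
  induction m; intro H; simpl. reflexivity.
  rewrite IHm by (intros; apply H; lia). rewrite H by lia. apply cadd_0l.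
Qed.

Lemma csum_single (A : CStarAlgebra) f m c :
  (c < m)%nat -> (forall a, (a < m)%nat -> a <> c -> f a = czero A) -> csum A f m = f c.
Proof.
  induction m; intros Hc H; simpl. lia.
  destruct (Nat.eq_dec c m) as [->|Hne].
  - rewrite csum_zero. apply cadd_0l. intros a Ha. apply H; lia.
  - rewrite IHm by (try lia; intros; apply H; lia). rewrite (H m) by lia. apply add_0r.
Qed.

Lemma mid n E (A : CStarAlgebra) (u : nat -> nat -> A) :
  simple_graph n E -> qaut_relations n E A u ->
  forall i j k l m p,
  E i k -> E j l -> E i m -> E k m -> (forall m', E i m' -> E k m' -> m' = m) ->
  E j p -> E l p ->
  cmul A (u i j) (u k l) = cmul A (cmul A (u i j) (u m p)) (u k l).
Proof.
  intros [Hb [Hs Hirr]] [R1 [R2 R3]] i j k l m p Hik Hjl Him Hkm Hu Hjp Hlp.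
  destruct (Hb _ _ Hik). destruct (Hb _ _ Hjl). destruct (Hb _ _ Him). destruct (Hb _ _ Hjp).
  transitivity (cmul A (cmul A (u i j) (csum A (fun a => u a p) n)) (u k l)).
  { destruct (R2 p) as [_ ->]; auto. rewrite cmul_1r. reflexivity. }
  rewrite csum_mul_l, csum_mul_r.
  apply (csum_single A (fun a => cmul A (cmul A (u i j) (u a p)) (u k l))); auto.
  intros a Ha Hne.
  destruct (classic (E i a)) as [Hia|Hia].
  - destruct (classic (E a k)) as [Hak|Hak].
    + exfalso. apply Hne. apply Hu; auto.
    + rewrite <- cmul_assoc. destruct (R3 a p k l) as [-> _]; auto.
      * intros [_ Q1]. apply Hak. apply Q1. apply Hs; auto.
      * apply mul_0r.
  - destruct (R3 i j a p) as [-> _]; auto.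
    + intros [_ Q1]. apply Hia. apply Q1; auto.
    + apply mul_0l.
Qed.

Theorem part1 :
  (forall (n : nat) (E : nat -> nat -> Prop),
     simple_graph n E ->
     (forall i k, E i k ->
        exists m, E i m /\ E k m /\ (forall m', E i m' -> E k m' -> m' = m)) ->
     Gaut_plus_eq_star n E).
Proof.
  intros n E Hg Hu A u Hq i j k l Hik Hjl.
  pose proof Hg as [Hb [Hs Hirr]].
  assert (tri : forall x y z, E x y -> E x z -> E y z ->
            forall w, E x w -> E y w -> w = z).
  { intros x y z Hxy Hxz Hyz w Hxw Hyw. destruct (Hu x y Hxy) as [m0 [_ [_ U]]].
    rewrite (U w), (U z); auto. }
  destruct (Hu i k Hik) as [m [Him [Hkm _]]].
  destruct (Hu j l Hjl) as [p [Hjp [Hlp _]]].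
  assert (H1 := @mid n E A u Hg Hq i j k l m p Hik Hjl Him Hkm (tri _ _ _ Hik Him Hkm) Hjp Hlp).
  assert (H2 := @mid n E A u Hg Hq i j m p k l Him Hjp Hik (Hs _ _ Hkm) (tri _ _ _ Him Hik (Hs _ _ Hkm)) Hjl (Hs _ _ Hlp)).
  assert (H3 := @mid n E A u Hg Hq k l m p i j Hkm Hlp (Hs _ _ Hik) (Hs _ _ Him)
                 (tri _ _ _ Hkm (Hs _ _ Hik) (Hs _ _ Him)) (Hs _ _ Hjl) (Hs _ _ Hjp)).
  assert (H4 := @mid n E A u Hg Hq m p i j k l (Hs _ _ Him) (Hs _ _ Hjp) (Hs _ _ Hkm) Hik
                 (tri _ _ _ (Hs _ _ Him) (Hs _ _ Hkm) Hik) (Hs _ _ Hlp) Hjl).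
  assert (H5 := @mid n E A u Hg Hq k l i j m p (Hs _ _ Hik) (Hs _ _ Hjl) Hkm Him
                 (tri _ _ _ (Hs _ _ Hik) Hkm Him) Hlp Hjp).
  set (a := u i j) in *. set (b := u k l) in *. set (c := u m p) in *.
  destruct Hq as [R1 _].
  destruct (Hb _ _ Hik). destruct (Hb _ _ Hjl).
  destruct (R1 i j) as [Sa Ia]; auto. destruct (R1 k l) as [Sb Ib]; auto.
  apply comm_of; auto.
  assert (E1 := f_equal (fun t => cmul A t a) H1).
  assert (E2 := f_equal (fun t => cmul A (cmul A t b) a) H2).
  assert (E3 := f_equal (fun t => cmul A (cmul A a t) (cmul A b a)) H3).
  assert (E4 := f_equal (fun t => cmul A (cmul A (cmul A a b) a) t) (eq_sym H4)).
  assert (E5 := f_equal (fun t => cmul A (cmul A (cmul A a b) t) a) H2).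
  assert (E6 := f_equal (fun t => cmul A (cmul A (cmul A a b) a) t) (eq_sym H5)).
  simpl in *.
  repeat rewrite cmul_assoc in E1; repeat rewrite cmul_assoc in E2; repeat rewrite cmul_assoc in E3; repeat rewrite cmul_assoc in E4; repeat rewrite cmul_assoc in E5; repeat rewrite cmul_assoc in E6; repeat rewrite cmul_assoc.
  congruence.
Qed.

Lemma walk0_inv E v w : walk E v w 0 -> v = w.
Proof. intro H. inversion H. reflexivity. Qed.

Lemma walk1_inv E v w : walk E v w 1 -> E v w.
Proof. intro H. inversion H; subst. apply walk0_inv in H4. subst. assumption. Qed.

Lemma one_common n E D b c :
  simple_graph n E -> distance_regular n E D b c -> b 0%nat = (b 1%nat + 2)%nat ->
  forall v w, E v w ->
  exists m, E v m /\ E w m /\ (forall m', E v m' -> E w m' -> m' = m).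
Proof.
  intros [Hbd [Hs Hirr]] [Hconn [_ [_ [Hdiam [HB _]]]]] Hb v w Hvw.
  destruct (Hbd _ _ Hvw) as [Hv Hw].
  assert (Hd1 : Defs.dist E v w 1).
  { split. apply walkS with w; auto. apply walk0.
    intros m Hm. destruct m. apply walk0_inv in Hm. subst. exfalso; apply (Hirr w); auto. lia. }
  assert (HD : (1 <= D)%nat) by (apply (Hdiam v w 1); auto).
  assert (Hww : Defs.dist E w w 0) by (split; [apply walk0 | intros; lia]).
  destruct (HB 0%nat w w ltac:(lia) Hw Hw Hww) as [l1 [N1 [L1 I1]]].
  destruct (HB 1%nat v w HD Hv Hw Hd1) as [l2 [N2 [L2 I2]]].
  assert (I1' : forall x, In x l1 <-> E w x).
  { intro x. rewrite I1. split. tauto. intro Hx. split; auto.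
    split. apply walkS with x; auto. apply walk0.
    intros m Hm. destruct m. apply walk0_inv in Hm. subst. exfalso; apply (Hirr x); auto. lia. }
  set (f := fun x => if in_dec Nat.eq_dec x l2 then true else false).
  assert (Lf : length (filter f l1) = length l2).
  { apply Nat.le_antisymm; apply NoDup_incl_length.
    - apply NoDup_filter; auto.
    - intros x Hx. apply filter_In in Hx. destruct Hx as [_ Hx]. unfold f in Hx.
      destruct (in_dec Nat.eq_dec x l2); auto; discriminate.
    - auto.
    - intros x Hx. apply filter_In. split.
      + apply I1'. apply I2 in Hx. tauto.
      + unfold f. destruct (in_dec Nat.eq_dec x l2); auto. }
  set (R := filter (fun x => negb (f x)) l1).
  assert (LR : length R = 2%nat).
  { pose proof (filter_length f l1). fold R in H. lia. }
  assert (NR : NoDup R) by (apply NoDup_filter; auto).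
  assert (IR : forall x, In x R <-> E w x /\ ~ Defs.dist E v x 2).
  { intro x. unfold R. rewrite filter_In, I1'. unfold f.
    destruct (in_dec Nat.eq_dec x l2) as [Hin|Hin].
    - simpl. rewrite I2 in Hin. split. intros [_ H]; discriminate. intros [_ H]. tauto.
    - simpl. split. intros [H _]. split; auto. intro Hd. apply Hin. apply I2. auto.
      intros [H _]. auto. }
  assert (vR : In v R).
  { apply IR. split. auto. intros [_ Hm]. specialize (Hm 0%nat (walk0 E v)). lia. }
  assert (Hr : exists r, r <> v /\ In r R /\ forall y, In y R -> y = v \/ y = r).
  { destruct R as [|r1 [|r2 [|r3 t]]]; simpl in LR; try discriminate.
    inversion NR; subst. simpl in H1.
    destruct vR as [<-|[<-|[]]].
    - exists r2. split. intro; subst; tauto. split. simpl; auto.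
      intros y [<-|[<-|[]]]; auto.
    - exists r1. split. intro; subst; tauto. split. simpl; auto.
      intros y [<-|[<-|[]]]; auto. }
  destruct Hr as [r [Hrv [HrR Hry]]].
  destruct (proj1 (IR r) HrR) as [Hwr Hnd].
  destruct (Hbd _ _ Hwr) as [_ Hrn].
  exists r. split; [|split; auto].
  - destruct (Hconn v r Hv Hrn) as [d [Hwd Hmin]].
    assert (d <= 2)%nat.
    { apply Hmin. apply walkS with w; auto. apply walkS with r; auto. apply walk0. }
    destruct d as [|[|[|d]]].
    + apply walk0_inv in Hwd. congruence.
    + apply walk1_inv; auto.
    + exfalso. apply Hnd. split; auto.
    + lia.
  - intros m' Hvm Hwm.
    assert (Hm : In m' R).
    { apply IR. split; auto. intros [_ Hm]. specialize (Hm 1%nat).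
      assert (walk E v m' 1) by (apply walkS with m'; auto; apply walk0). specialize (Hm H). lia. }
    destruct (Hry m' Hm); auto. subst. exfalso. apply (Hirr v); auto.
Qed.

Theorem lemma3p5 :
  (forall (n : nat) (E : nat -> nat -> Prop),
     simple_graph n E ->
     (forall i k, E i k ->
        exists m, E i m /\ E k m /\ (forall m', E i m' -> E k m' -> m' = m)) ->
     Gaut_plus_eq_star n E) /\
  (forall (n : nat) (E : nat -> nat -> Prop) (D : nat) (b c : nat -> nat),
     simple_graph n E ->
     distance_regular n E D b c ->
     b 0%nat = (b 1%nat + 2)%nat ->
     Gaut_plus_eq_star n E).
Proof.
  split.
  - exact part1.
  - intros n E D b c Hg Hdr Hb. apply part1; auto.
    exact (@one_common n E D b c Hg Hdr Hb).
Qed.
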